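(* Consider the resilient constrained consensus algorithm described in the context, with at most $f$ Byzantine agents. Suppose $\mathcal X=\bigcap_{i\in\mathcal H}\mathcal X_i=\{x^*\}$ is a singleton, and suppose the set of normal agents $\mathcal H$ is $k$-redundant. Suppose there is a constant $\mu>0$ such that for every $x\in\mathbb R^m$ and every $\mathcal S\subseteq\mathcal H$ with $|\mathcal S|\ge n-k$, $$\max_{i\in\mathcal S}\mathrm{dist}(x,\mathcal X_i)\ \ge\ \mu\,\mathrm{dist}\Big(x,\bigcap_{i\in\mathcal S}\mathcal X_i\Big).$$ If $k>\frac{4f}{\mu^2}+2f-1$ and $0<\alpha<\frac{\mu^2k-2f\mu^2-4f+\mu^2}{4|\mathcal H|^3}$, then there is a constant $\rho\in(0,1)$ such that for all $t\ge 0$ $$\sum_{i\in\mathcal H}\|x_i(t)-x^*\|^2\le\rho^t\sum_{i\in\mathcal H}\|x_i(0)-x^*\|^2.$$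
   Context: Setting: There are $n$ agents $\mathcal N=\{1,\dots,n\}$, and every agent can communicate with every other agent (complete graph). An integer $f\ge 0$ is known to all agents. The agents are partitioned into normal agents $\mathcal H$ and Byzantine agents $\mathcal F$ with $|\mathcal F|\le f$, so $|\mathcal H|\ge n-f$. Each normal agent $i\in\mathcal H$ has a nonempty closed convex set $\mathcal X_i\subseteq\mathbb R^m$. Each normal agent's state is constrained to lie in $\mathcal X_i$; in particular $x_i(0)\in\mathcal X_i$. Algorithm (discrete time $t=0,1,2,\dots$): each normal agent $i$ has a state $x_i(t)\in\mathbb R^m$. At time $t$, agent $i$ receives a vector $x_{ji}(t)$ from each $j\in\mathcal N\setminus\{i\}$. If $j\in\mathcal H$, then $x_{ji}(t)=x_j(t)$. If $j\in\mathcal F$, then $x_{ji}(t)$ is arbitrary and may differ for different recipients. Agent $i$ discards the $f$ received vectors with the largest distance $\|x_i(t)-x_{ji}(t)\|$, with ties broken arbitrarily. Let $\mathcal M_i(t)\subseteq\mathcal N\setminus\{i\}$ be the set of the remaining $n-f-1$ senders. The update is $$x_i(t+1)=\mathrm P_{\mathcal X_i}\Big[x_i(t)+\alpha\sum_{j\in\mathcal M_i(t)}(x_{ji}(t)-x_i(t))\Big],$$ with $\alpha>0$ and $\mathrm P_{\mathcal C}$ the Euclidean projection onto $\mathcal C$. Definitions: $\mathrm{dist}(x,\mathcal C)=\|x-\mathrm P_{\mathcal C}[x]\|$. $\mathcal H$ is $k$-redundant if for every $\mathcal S\subseteq\mathcal H$ with $|\mathcal S|\ge n-k$ we have $\bigcap_{i\in\mathcal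 S}\mathcal X_i=\bigcap_{i\in\mathcal H}\mathcal X_i$. *)

(* Defs.v *)
From mathcomp Require Import all_boot all_order all_algebra.
From mathcomp Require Import boolp classical_sets reals.
Set Implicit Arguments. Unset Strict Implicit. Unset Printing Implicit Defensive.
Import Order.TTheory GRing.Theory Num.Theory.
Local Open Scope ring_scope.
Local Open Scope classical_set_scope.

Definition enorm (R : realType) (m : nat) (v : 'rV[R]_m) : R :=
  Num.sqrt (\sum_(j < m) v ord0 j ^+ 2).

Definition eclosed (R : realType) (m : nat) (C : set 'rV[R]_m) : Prop :=
  forall x, (forall e : R, 0 < e -> exists2 y, C y & enorm (x - y) < e) -> C x.

Definition convex_set (R : realType) (m : nat) (C : set 'rV[R]_m) : Prop :=
  forall x y (l : R), C x -> C y -> 0 <= l <= 1 -> C (l *: x + (1 - l) *: y).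

Definition is_proj (R : realType) (m : nat) (C : set 'rV[R]_m) (x p : 'rV[R]_m) : Prop :=
  C p /\ forall y, C y -> enorm (x - p) <= enorm (x - y).

(* P_C[x]: the Euclidean projection (unique for nonempty closed convex C). *)
Definition proj (R : realType) (m : nat) (C : set 'rV[R]_m) (x : 'rV[R]_m) : 'rV[R]_m :=
  xget 0 [set p | is_proj C x p].

Definition dist (R : realType) (m : nat) (x : 'rV[R]_m) (C : set 'rV[R]_m) : R :=
  enorm (x - proj C x).

Definition capX (R : realType) (m n : nat) (X : 'I_n -> set 'rV[R]_m) (S : {set 'I_n}) : set 'rV[R]_m :=
  [set x | forall i, i \in S -> X i x].

Definition k_redundant (R : realType) (m n : nat) (X : 'I_n -> set 'rV[R]_m)
    (H : {set 'I_n}) (k : nat) : Prop :=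
  forall S : {set 'I_n}, S \subset H -> (n - k <= #|S|)%N -> capX X S = capX X H.

(* One run of the resilient constrained consensus algorithm.
   x t i : state of agent i at time t (meaningful for i \in H);
   msg t j i : vector received by i from j at time t;
   M t i : set of kept senders of agent i at time t. *)
Definition algorithm_run (R : realType) (m n f : nat) (X : 'I_n -> set 'rV[R]_m)
    (H : {set 'I_n}) (alpha : R) (x : nat -> 'I_n -> 'rV[R]_m)
    (msg : nat -> 'I_n -> 'I_n -> 'rV[R]_m) (M : nat -> 'I_n -> {set 'I_n}) : Prop :=
  (forall i, i \in H -> X i (x 0%N i)) /\
  (forall t i j, i \in H -> j \in H -> j != i -> msg t j i = x t j) /\
  (forall t i, i \in H ->
     [/\ M t i \subset [set~ i],
         #|M t i| = (n - f - 1)%N,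
         (forall j j', j \in M t i -> j' \in [set~ i] :\: M t i ->
            enorm (x t i - msg t j i) <= enorm (x t i - msg t j' i)) &
         x t.+1 i = proj (X i) (x t i + alpha *: \sum_(j in M t i) (msg t j i - x t i))]).

(* Main.v *)
Require Import Defs.
From mathcomp Require Import all_boot all_order all_algebra.
From mathcomp Require Import boolp classical_sets reals.
From mathcomp Require Import ring lra zify.
Set Implicit Arguments. Unset Strict Implicit. Unset Printing Implicit Defensive.
Import Order.TTheory GRing.Theory Num.Theory.
Local Open Scope ring_scope.
Local Open Scope classical_set_scope.

Definition sq (R : realType) (m : nat) (v : 'rV[R]_m) : R := \sum_(j < m) v ord0 j ^+ 2.
Definition ip (R : realType) (m : nat) (u v : 'rV[R]_m) : R := \sum_(j < m) u ord0 j * v ord0 j.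

Lemma sq_ge0 (R : realType) m (v : 'rV[R]_m) : 0 <= sq v.
Proof. by apply: sumr_ge0 => j _; rewrite sqr_ge0. Qed.

Lemma enorm_sq (R : realType) m (v : 'rV[R]_m) : enorm v ^+ 2 = sq v.
Proof. by rewrite /enorm sqr_sqrtr // sq_ge0. Qed.

Lemma enorm_le (R : realType) m (u v : 'rV[R]_m) : (enorm u <= enorm v) = (sq u <= sq v).
Proof. by rewrite /enorm ler_sqrt // sq_ge0. Qed.

Lemma ipC (R : realType) m (u v : 'rV[R]_m) : ip u v = ip v u.
Proof. by apply: eq_bigr => j _; rewrite mulrC. Qed.

Lemma sqD (R : realType) m (u v : 'rV[R]_m) : sq (u + v) = sq u + 2 * ip u v + sq v.
Proof.
rewrite /sq /ip mulr_sumr -!big_split /=; apply: eq_bigr => j _.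
rewrite !mxE; ring.
Qed.

Lemma sqN (R : realType) m (u : 'rV[R]_m) : sq (- u) = sq u.
Proof. by apply: eq_bigr => j _; rewrite !mxE sqrrN. Qed.

Lemma sqB (R : realType) m (u v : 'rV[R]_m) : sq (u - v) = sq (v - u).
Proof. by rewrite -sqN opprB. Qed.

Lemma sqZ (R : realType) m (a : R) (u : 'rV[R]_m) : sq (a *: u) = a ^+ 2 * sq u.
Proof. rewrite /sq mulr_sumr; apply: eq_bigr => j _; rewrite !mxE; ring. Qed.

Lemma ipZr (R : realType) m (a : R) (u v : 'rV[R]_m) : ip u (a *: v) = a * ip u v.
Proof. rewrite /ip mulr_sumr; apply: eq_bigr => j _; rewrite !mxE; ring. Qed.

Lemma ipDr (R : realType) m (u v w : 'rV[R]_m) : ip u (v + w) = ip u v + ip u w.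
Proof. rewrite /ip -big_split; apply: eq_bigr => j _; by rewrite !mxE mulrDr. Qed.

Lemma ipNr (R : realType) m (u v : 'rV[R]_m) : ip u (- v) = - ip u v.
Proof. rewrite /ip -sumrN; apply: eq_bigr => j _; rewrite !mxE; ring. Qed.

Lemma ip_sumr (R : realType) m (I : finType) (A : pred I) (u : 'rV[R]_m) (F : I -> 'rV[R]_m) :
  ip u (\sum_(i in A) F i) = \sum_(i in A) ip u (F i).
Proof.
rewrite /ip exchange_big /=; apply: eq_bigr => j _.
by rewrite summxE mulr_sumr.
Qed.

Lemma ip_amgm (R : realType) m (u v : 'rV[R]_m) : 2 * ip u v <= 2 * sq u + sq v / 2.
Proof.
rewrite /ip /sq mulr_sumr mulr_sumr mulr_suml -big_split /=.
apply: ler_sum => j _.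
have := sqr_ge0 (2 * u ord0 j - v ord0 j); nra.
Qed.

Lemma sq_sub_le (R : realType) m (u v : 'rV[R]_m) : sq (u - v) <= 2 * sq u + 2 * sq v.
Proof.
rewrite /sq !mulr_sumr -big_split /=.
apply: ler_sum => j _; rewrite !mxE.
have := sqr_ge0 (u ord0 j + v ord0 j); nra.
Qed.

Lemma sq_coord_le (R : realType) m (u : 'rV[R]_m) (j : 'I_m) : u ord0 j ^+ 2 <= sq u.
Proof.
rewrite /sq (bigD1 j) //= lerDl; apply: sumr_ge0 => i _; exact: sqr_ge0.
Qed.

Lemma sum_sq_le (R : realType) (I : finType) (A : pred I) (a : I -> R) :
  (\sum_(i in A) a i) ^+ 2 <= #|A|%:R * \sum_(i in A) a i ^+ 2.
Proof.
have h1 : \sum_(i in A) \sum_(j in A) (a i ^+ 2 + a j ^+ 2) =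
          2 * (#|A|%:R * \sum_(i in A) a i ^+ 2).
  transitivity (\sum_(i in A) (a i ^+ 2 * #|A|%:R + \sum_(j in A) a j ^+ 2)).
    by apply: eq_bigr => i _; rewrite big_split /= sumr_const mulr_natr.
  rewrite big_split /= -mulr_suml sumr_const mulr_natr; ring.
have h2 : 2 * (\sum_(i in A) a i) ^+ 2 = \sum_(i in A) \sum_(j in A) 2 * (a i * a j).
  rewrite expr2 mulr_suml mulr_sumr; apply: eq_bigr => i _.
  by rewrite mulr_sumr mulr_sumr; apply: eq_bigr => j _.
have h3 : \sum_(i in A) \sum_(j in A) 2 * (a i * a j) <=
          \sum_(i in A) \sum_(j in A) (a i ^+ 2 + a j ^+ 2).
  apply: ler_sum => i _; apply: ler_sum => j _.
  have := sqr_ge0 (a i - a j); nra.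
have : 2 * (\sum_(i in A) a i) ^+ 2 <= 2 * (#|A|%:R * \sum_(i in A) a i ^+ 2).
  by rewrite h2 -h1.
by rewrite ler_pM2l.
Qed.

Lemma sq_sum_le (R : realType) m (I : finType) (A : pred I) (v : I -> 'rV[R]_m) :
  sq (\sum_(i in A) v i) <= #|A|%:R * \sum_(i in A) sq (v i).
Proof.
rewrite /sq exchange_big /= mulr_sumr; apply: ler_sum => c _.
rewrite summxE; exact: sum_sq_le.
Qed.

Lemma is_proj_sq (R : realType) m (C : set 'rV[R]_m) z p :
  is_proj C z p -> C p /\ forall y, C y -> sq (z - p) <= sq (z - y).
Proof. by case=> Cp h; split => // y Cy; rewrite -enorm_le; apply: h. Qed.

Lemma proj_obtuse (R : realType) m (C : set 'rV[R]_m) z p y :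
  convex_set C -> is_proj C z p -> C y -> sq (p - y) <= sq (z - y).
Proof.
move=> cvx /is_proj_sq [Cp hp] Cy.
set w := z - p; set d := p - y.
have key : forall l : R, 0 < l <= 1 -> - (2 * ip w d) <= l * sq d.
  move=> l /andP[l0 l1].
  have Cl : C (l *: y + (1 - l) *: p) by apply: cvx => //; rewrite (ltW l0) l1.
  have := hp _ Cl.
  have -> : z - (l *: y + (1 - l) *: p) = w + l *: d.
    by apply/rowP => j; rewrite !mxE; ring.
  rewrite -/w [sq (w + _)]sqD ipZr sqZ => h.
  have h' : 0 <= l * (2 * ip w d + l * sq d) by nra.
  rewrite pmulr_rge0 // in h'; lra.
have hge : 0 <= ip w d.
  rewrite leNgt; apply/negP => hlt.
  have s0 := sq_ge0 d.
  have hl : 0 < (- ip w d) / (sq d - ip w d) <= 1.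
    apply/andP; split; first by apply: divr_gt0; lra.
    by rewrite ler_pdivrMr; lra.
  have := key _ hl.
  have hsd : 0 < sq d - ip w d by lra.
  rewrite mulrAC ler_pdivlMr // => h2.
  nra.
have -> : z - y = w + d by rewrite /w /d addrA subrK.
rewrite sqD; have := sq_ge0 w; lra.
Qed.

Lemma amgm_e (R : realType) (e a b : R) : 0 < e -> 2 * a * b <= e * a ^+ 2 + b ^+ 2 / e.
Proof.
move=> e0.
have h := sqr_ge0 (e * a - b).
have : e * (2 * a * b) <= e * (e * a ^+ 2 + b ^+ 2 / e).
  rewrite mulrDr [e * (_ / e)]mulrC divfK ?gt_eqF //; nra.
by rewrite ler_pM2l.
Qed.

Lemma small_le (R : realType) (x K : R) :
  (forall k : nat, x <= K * k.+1%:R^-1) -> x <= 0.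
Proof.
move=> h; rewrite leNgt; apply/negP => x0.
have K0 : 0 <= K.
  have := h 0%N; rewrite invr1 mulr1; lra.
have : 0 < x / (K + 1) by apply: divr_gt0; lra.
move=> /ltr_add_invr [k]; rewrite add0r => hk.
have := h k.
have ek : 0 < k.+1%:R^-1 :> R by rewrite invr_gt0 ltr0Sn.
rewrite ltr_pdivlMr in hk; last lra.
rewrite mulrDr mulr1 mulrC in hk.
move: hk ek; rewrite /(_ / _); move: (k.+1%:R^-1) => e; lra.
Qed.

Lemma par_id (R : realType) m (z a b : 'rV[R]_m) :
  sq (a - b) + 4 * sq (z - ((1/2) *: a + (1 - 1/2) *: b)) = 2 * sq (z - a) + 2 * sq (z - b).
Proof.
rewrite /sq !mulr_sumr -!big_split /=; apply: eq_bigr => j _; rewrite !mxE; by field.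
Qed.

Lemma sum_const_ord (R : realType) m (a : R) : \sum_(c < m) a = m%:R * a.
Proof. by rewrite sumr_const card_ord mulr_natl. Qed.

Lemma sq_abs_le (R : realType) (a b : R) : 0 <= b -> a ^+ 2 <= b ^+ 2 -> a <= b.
Proof. move=> b0 h; rewrite leNgt; apply/negP => hab; nra. Qed.

Lemma proj_exists (R : realType) m (C : set 'rV[R]_m) z :
  C !=set0 -> eclosed C -> convex_set C -> exists p, is_proj C z p.
Proof.
move=> [y0 Cy0] clC cvx.
set E := [set r | exists2 y, C y & r = sq (z - y)].
set dl := inf E.
have Ene : E !=set0 by exists (sq (z - y0)); exists y0.
have Elb : has_lbound E by exists 0 => r [y _ ->]; exact: sq_ge0.
have dlE : forall y, C y -> dl <= sq (z - y).
  by move=> y Cy; apply: ge_inf => //; exists y.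
have dl0 : 0 <= dl by apply: lb_le_inf => // r [y _ ->]; exact: sq_ge0.
pose e (k : nat) : R := k.+1%:R^-1.
have e0 : forall k, 0 < e k by move=> k; rewrite invr_gt0 ltr0Sn.
have e1 : forall k, e k <= 1 by move=> k; rewrite invf_le1 ?ltr0Sn // ler1n.
have hY : forall k, exists y, C y /\ sq (z - y) < dl + e k ^+ 2.
  move=> k; have [r [y Cy ->] hr] := inf_adherent (exprn_gt0 2 (e0 k)) (conj Ene Elb).
  by exists y.
have [Y HY] := choice hY.
have par : forall k l, sq (Y k - Y l) <= 2 * e k ^+ 2 + 2 * e l ^+ 2.
  move=> k l.
  have Cmid : C ((1/2) *: Y k + (1 - 1/2) *: Y l).
    apply: cvx; [exact: (HY k).1 | exact: (HY l).1 |].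
    apply/andP; split; first by rewrite divr_ge0.
    by rewrite ler_pdivrMr // mul1r ler1n.
  have := par_id z (Y k) (Y l); have := dlE _ Cmid.
  have := (HY k).2; have := (HY l).2; lra.
have coord : forall c k l, Y k ord0 c - Y l ord0 c <= 2 * e k + 2 * e l.
  move=> c k l; apply: sq_abs_le.
    by have := e0 k; have := e0 l; lra.
  have h := sq_coord_le (Y k - Y l) c; rewrite !mxE in h.
  apply: le_trans h _; apply: le_trans (par k l) _.
  have := e0 k; have := e0 l; nra.
pose S c := [set r | exists k, r = Y k ord0 c - 2 * e k].
have Sne : forall c, S c !=set0 by move=> c; exists (Y 0%N ord0 c - 2 * e 0%N); exists 0%N.
have Sub : forall c, ubound (S c) (Y 0%N ord0 c + 2 * e 0%N).
  move=> c r [k ->]; have := coord c k 0%N; lra.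
have Shs : forall c, has_sup (S c) by move=> c; split => //; exists (Y 0%N ord0 c + 2 * e 0%N).
pose p := \row_c sup (S c).
have pc : forall c k, (p ord0 c - Y k ord0 c) ^+ 2 <= (2 * e k) ^+ 2.
  move=> c k; rewrite mxE.
  have lo : Y k ord0 c - 2 * e k <= sup (S c).
    by apply: sup_upper_bound => //; exists k.
  have hi : sup (S c) <= Y k ord0 c + 2 * e k.
    apply: ge_sup => // r [l ->]; have := coord c l k; lra.
  have := e0 k; nra.
have pY : forall k, sq (p - Y k) <= m%:R * (4 * e k).
  move=> k; rewrite /sq.
  apply: le_trans (_ : \sum_(c < m) 4 * e k <= _); last first.
    by rewrite sum_const_ord.
  apply: ler_sum => c _; have := pc c k; rewrite !mxE => h.
  apply: le_trans h _; have := e0 k; have := e1 k; nra.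
have Cp : C p.
  apply: clC => eps eps0.
  have hm : (0:R) <= m%:R by rewrite ler0n.
  have : 0 < eps ^+ 2 / (4 * m%:R + 1) by apply: divr_gt0; [rewrite exprn_gt0 | lra].
  move=> /ltr_add_invr [k]; rewrite add0r -/(e k) => hk.
  exists (Y k); first exact: (HY k).1.
  rewrite /enorm -(@ger0_norm _ eps) ?(ltW eps0) // -sqrtr_sqr ltr_sqrt ?exprn_gt0 //.
  apply: le_lt_trans (pY k) _.
  rewrite ltr_pdivlMr in hk; last lra.
  have := e0 k; nra.
exists p; split => // y Cy.
rewrite enorm_le; apply: le_trans (dlE _ Cy).
suff : sq (z - p) - dl <= 0 by lra.
apply: (@small_le _ _ (1 + m%:R * (dl + 5) + 4 * m%:R)) => k.
have -> : z - p = (z - Y k) + (Y k - p) by rewrite addrA subrK.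
rewrite sqD.
have h1 : sq (z - Y k) <= dl + e k.
  have := (HY k).2; have := e0 k; have := e1 k; nra.
have h2 : sq (Y k - p) <= m%:R * (4 * e k) by rewrite sqB.
have h3 : 2 * ip (z - Y k) (Y k - p) <= m%:R * (e k * (dl + 5)).
  rewrite /ip mulr_sumr.
  apply: le_trans (_ : \sum_(c < m) e k * (dl + 5) <= _); last first.
    by rewrite sum_const_ord.
  apply: ler_sum => c _; rewrite mulrA.
  apply: le_trans (amgm_e _ _ (e0 k)) _.
  have hu : (z - Y k) ord0 c ^+ 2 <= dl + 1.
    apply: le_trans (sq_coord_le _ c) _; apply: le_trans h1 _; have := e1 k; lra.
  have hv : (Y k - p) ord0 c ^+ 2 <= 4 * e k ^+ 2.
    have := pc c k; rewrite !mxE => h; rewrite -sqrrN opprB; apply: le_trans h _; rewrite exprMn; lra.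
  have hv' : (Y k - p) ord0 c ^+ 2 / e k <= 4 * e k.
    rewrite ler_pdivrMr ?e0 //; nra.
  have := e0 k; nra.
rewrite -/(e k).
have hm : 0 <= m%:R :> R by rewrite ler0n.
have := e0 k; nra.
Qed.

Lemma proj_spec (R : realType) m (C : set 'rV[R]_m) z :
  C !=set0 -> eclosed C -> convex_set C -> is_proj C z (proj C z).
Proof. by move=> ne cl cv; apply: xgetPex; apply: proj_exists. Qed.

Lemma dist_le (R : realType) m (C : set 'rV[R]_m) z y :
  C !=set0 -> eclosed C -> convex_set C -> C y -> dist z C <= enorm (z - y).
Proof. by move=> ne cl cv Cy; have [_ h] := proj_spec z ne cl cv; apply: h. Qed.

Lemma dist_single (R : realType) m (z a : 'rV[R]_m) : dist z [set a] = enorm (z - a).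
Proof.
rewrite /dist /proj.
have : is_proj [set a] z (xget 0 [set p | is_proj [set a] z p]).
  apply: xgetPex; exists a; split => // y ->; exact: lexx.
by case => -> _.
Qed.

Lemma bigmax_lt_aux (R : realType) (I : finType) (A : pred I) (F : I -> R) (a : R) :
  0 < a -> (forall i, A i -> F i < a) -> \big[Num.max/0]_(i in A) F i < a.
Proof.
move=> a0 h; elim/big_ind: _ => //.
  by move=> x y hx hy; rewrite gt_max hx hy.
Qed.

Lemma far_card (R : realType) m n k (H : {set 'I_n}) (X : 'I_n -> set 'rV[R]_m)
   (xstar y : 'rV[R]_m) (mu : R) (xs : 'I_n -> 'rV[R]_m) :
  (forall S : {set 'I_n}, S \subset H -> (n - k <= #|S|)%N -> capX X S = [set xstar]) ->
  (forall i, i \in H -> [/\ X i !=set0, eclosed (X i) & convex_set (X i)]) ->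
  0 < mu ->
  (forall (y : 'rV[R]_m) (S : {set 'I_n}), S \subset H -> (n - k <= #|S|)%N ->
     \big[Num.max/0]_(i in S) dist y (X i) >= mu * dist y (capX X S)) ->
  (forall j, j \in H -> X j (xs j)) ->
  (k < n)%N ->
  (#|[set j in H | (sq (y - xs j) < mu ^+ 2 * sq (y - xstar))%R]| < n - k)%N.
Proof.
move=> hS hX mu0 hmu hxs kn.
set S := [set j in H | _].
rewrite ltnNge; apply/negP => hc.
have SH : S \subset H by apply/fintype.subsetP => j; rewrite inE => /andP[].
have := hmu y S SH hc; rewrite hS // dist_single.
have [j0 j0S] : exists j, j \in S.
  by apply/card_gt0P; apply: leq_trans hc; rewrite subn_gt0.
have pos : 0 < mu * enorm (y - xstar).
  move: j0S; rewrite inE => /andP[_ h].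
  have : 0 < mu ^+ 2 * sq (y - xstar) by apply: le_lt_trans h; exact: sq_ge0.
  rewrite pmulr_rgt0 ?exprn_gt0 // => hs.
  by rewrite mulr_gt0 // /enorm sqrtr_gt0.
move=> hge; suff : \big[Num.max/0]_(i in S) dist y (X i) < mu * enorm (y - xstar).
  by rewrite ltNge hge.
apply: bigmax_lt_aux => // j hjS; have : j \in S := hjS; rewrite inE => /andP[jH hj].
have [ne cl cv] := hX j jH.
apply: le_lt_trans (dist_le y ne cl cv (hxs j jH)) _.
rewrite /enorm -(@ger0_norm _ mu) ?(ltW mu0) // -sqrtr_sqr -sqrtrM ?sqr_ge0 //.
rewrite ltr_sqrt //; apply: le_lt_trans hj; exact: sq_ge0.
Qed.

Lemma pair_le (R : realType) n (H : {set 'I_n}) (g : 'I_n -> R) i j :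
  (forall l, 0 <= g l) -> i \in H -> j \in H -> i != j -> g i + g j <= \sum_(l in H) g l.
Proof.
move=> g0 iH jH ij.
rewrite (big_setD1 i iH) (big_setD1 j) /=; last by rewrite !inE eq_sym ij.
rewrite addrA lerDl; apply: sumr_ge0 => l _; exact: g0.
Qed.

Lemma sq_diff_V (R : realType) m n (H : {set 'I_n}) (xs : 'I_n -> 'rV[R]_m) xstar i j :
  i \in H -> j \in H -> i != j ->
  sq (xs i - xs j) <= 2 * \sum_(l in H) sq (xs l - xstar).
Proof.
move=> iH jH ij.
have -> : xs i - xs j = (xs i - xstar) - (xs j - xstar) by rewrite opprB addrA subrK.
apply: le_trans (sq_sub_le _ _) _.
have := @pair_le _ _ H (fun l => sq (xs l - xstar)) i j (fun l => sq_ge0 _) iH jH ij; lra.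
Qed.

Lemma exists_min (R : realType) (I : finType) (A : {set I}) (g : I -> R) j1 :
  j1 \in A -> exists2 j0, j0 \in A & forall j, j \in A -> g j0 <= g j.
Proof.
move=> j1A.
case: (@arg_minP _ R I j1 (fun j => j \in A) g j1A) => j0 j0A h.
by exists j0.
Qed.

Lemma sq0 (R : realType) m : sq (0 : 'rV[R]_m) = 0.
Proof. by rewrite /sq big1 // => j _; rewrite mxE expr0n. Qed.

Lemma agent_step (R : realType) m n f k (H : {set 'I_n}) (xs msgi : 'I_n -> 'rV[R]_m)
    (M : {set 'I_n}) (i : 'I_n) (xstar : 'rV[R]_m) (mu alpha : R) :
  i \in H ->
  (#|~: H| <= f)%N -> (f.+1 <= n)%N ->
  (forall j, j \in H -> j != i -> msgi j = xs j) ->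
  M \subset [set~ i] -> #|M| = (n - f - 1)%N ->
  (forall j j', j \in M -> j' \in [set~ i] :\: M ->
      enorm (xs i - msgi j) <= enorm (xs i - msgi j')) ->
  (#|[set j in H | (sq (xs i - xs j) < mu ^+ 2 * sq (xs i - xstar))%R]| < n - k)%N ->
  (k < n)%N -> 0 < mu -> 0 <= alpha ->
  sq (xs i + alpha *: \sum_(j in M) (msgi j - xs i) - xstar) <=
    sq (xs i - xstar)
    + alpha * (\sum_(j in H) sq (xs j - xstar)
               - (n%:R - f%:R - 4 * #|~: H|%:R + mu ^+ 2 * (k%:R + 1 - 2 * f%:R))
                 * sq (xs i - xstar))
    + alpha ^+ 2 * (2 * #|H|%:R ^+ 2 * \sum_(j in H) sq (xs j - xstar)).
Proof.
move=> iH hB hfn hmsg hMi hM hord hfar hkn mu0 al0.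
set V := \sum_(j in H) sq (xs j - xstar).
pose d2 j := sq (xs j - xstar).
pose v j := msgi j - xs i.
set u := \sum_(j in M) (msgi j - xs i).
have hMi' : forall j, j \in M -> j != i.
  by move=> j jM; move: (fintype.subsetP hMi j jM); rewrite in_setC in_set1.
have V0 : 0 <= V by apply: sumr_ge0 => j _; exact: sq_ge0.
have d20 : forall j, 0 <= d2 j by move=> j; exact: sq_ge0.
pose K := M :&: H. pose Bk := M :\: H. pose Dn := (H :\ i) :\: M.
have cn : (#|H| + #|~: H| = n)%N by rewrite cardsC card_ord.
have cKB : (#|K| + #|Bk| = #|M|)%N by rewrite cardsID.
have eqK : (H :\ i) :&: M = K.
  apply/setP => j; rewrite !inE; apply/idP/idP.
    by case/andP => /andP[_ ->] ->.
  case/andP => jM ->; rewrite andbT.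
  by move: (fintype.subsetP hMi j jM); rewrite in_setC in_set1 jM andbT.
have cHD : (#|K| + #|Dn| = #|H :\ i|)%N by rewrite -eqK cardsID.
have cH1 : #|H| = (1 + #|H :\ i|)%N by rewrite (cardsD1 i H) iH.
have cBk : (#|Bk| <= #|~: H|)%N.
  by apply: subset_leq_card; apply/fintype.subsetP => j; rewrite !inE => /andP[->].
have cBD : (#|Bk| <= #|Dn|)%N by lia.
have vK : forall j, j \in K -> v j = xs j - xs i.
  move=> j; rewrite !inE => /andP[jM jH]; rewrite /v hmsg //.
  exact: hMi'.
have Dn_ord : forall j j', j \in M -> j' \in Dn -> sq (v j) <= sq (xs i - xs j').
  move=> j j' jM; rewrite !inE => /andP[j'M /andP[j'i j'H]].
  have := hord j j' jM; rewrite !inE j'M j'i => /(_ isT).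
  rewrite (hmsg j') // enorm_le => h; rewrite /v sqB; exact: h.
have sqvV : forall j, j \in M -> sq (v j) <= 2 * V.
  move=> j jM; case jH : (j \in H).
    have jK : j \in K by rewrite inE jM jH.
    rewrite vK // sqB; apply: sq_diff_V => //.
    by rewrite eq_sym hMi'.
  have jB : j \in Bk by rewrite inE jM jH.
  have [j' j'D] : exists j', j' \in Dn.
    by apply/card_gt0P; apply: leq_trans (cBD); apply/card_gt0P; exists j.
  apply: le_trans (Dn_ord _ _ jM j'D) _.
  move: j'D; rewrite !inE => /andP[_ /andP[j'i j'H]].
  by apply: sq_diff_V; rewrite // eq_sym.
have hB2 : sq u <= 2 * #|H|%:R ^+ 2 * V.
  rewrite /u; apply: le_trans (sq_sum_le _ _) _.
  have hMH : #|M|%:R <= #|H|%:R :> R by rewrite ler_nat; lia.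
  have hs : \sum_(j in M) sq (msgi j - xs i) <= #|M|%:R * (2 * V).
    rewrite mulr_natl -sumr_const; apply: ler_sum => j jM; exact: sqvV.
  have hM0 : 0 <= #|M|%:R :> R by rewrite ler0n.
  apply: le_trans (ler_wpM2l hM0 hs) _.
  have hMM : #|M|%:R * #|M|%:R <= #|H|%:R * #|H|%:R :> R by apply: ler_pM.
  have h2V : 0 <= 2 * V by lra.
  have := ler_wpM2r h2V hMM; rewrite expr2; lra.
set ei := xs i - xstar.
have e1 : 2 * ip ei u = \sum_(j in K) 2 * ip ei (v j) + \sum_(j in Bk) 2 * ip ei (v j).
  by rewrite /u ip_sumr mulr_sumr (big_setID H).
have nK : \sum_(j in K) 2 * ip ei (v j) =
    \sum_(j in K) d2 j - #|K|%:R * d2 i - \sum_(j in K) sq (xs i - xs j).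
  rewrite (eq_bigr (fun j => d2 j - d2 i - sq (xs i - xs j))) => [|j jK].
    by rewrite !sumrB sumr_const mulr_natl.
  have := sqD ei (v j); rewrite vK // [sq (xs j - xs i)]sqB.
  have -> : ei + (xs j - xs i) = xs j - xstar by rewrite /ei addrC addrA subrK.
  rewrite /d2 -/ei; lra.
have sK : \sum_(j in K) d2 j = V - d2 i - \sum_(j in Dn) d2 j.
  rewrite /V (big_setD1 i iH) /= (big_setID (A := H :\ i) M) /= eqK; rewrite /d2; lra.
have KR : #|K|%:R + #|Bk|%:R + f%:R + 1 = n%:R :> R.
  by rewrite -[1]/(1%:R) -!natrD; congr (_%:R); lia.
have BkR : #|Bk|%:R <= #|~: H|%:R :> R by rewrite ler_nat.
have far : mu ^+ 2 * (k%:R + 1 - 2 * f%:R) * d2 i <= \sum_(j in K) sq (xs i - xs j).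
  have [d2p|d2n] := ltrP 0 (d2 i); last first.
    have -> : d2 i = 0 by apply: le_anti; rewrite d2n d20.
    by rewrite mulr0; apply: sumr_ge0 => j _; exact: sq_ge0.
  pose F := finset (fun j => (mu ^+ 2 * d2 i <= sq (xs i - xs j))%R).
  set S := [set j in H | _] in hfar.
  have mu2 : 0 < mu ^+ 2 by rewrite exprn_gt0.
  have iF : i \notin F.
    by rewrite /F !inE subrr sq0 -ltNge; apply: mulr_gt0.
  have eqS : H :\: F = S.
    by apply/setP => j; rewrite !inE ltNge andbC.
  have cHF : (#|H :&: F| + #|S| = #|H|)%N by rewrite -eqS cardsID.
  have hsub : H :&: F \subset (K :&: F) :|: Dn.
    apply/fintype.subsetP => j; rewrite !inE => /andP[jH jF].
    case jM : (j \in M); first by rewrite jH jF.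
    rewrite /= jH andbT; apply/eqP => eji; move: iF; rewrite /F inE; move: jF; rewrite eji => -> //.
  have cU : (#|H :&: F| <= #|K :&: F| + #|Dn|)%N.
    by apply: leq_trans (subset_leq_card hsub) _; rewrite cardsU leq_subr.
  have cq : (k + 1 <= #|K :&: F| + 2 * f)%N by lia.
  have cqR : k%:R + 1 - 2 * f%:R <= #|K :&: F|%:R :> R.
    have : (k + 1)%:R <= (#|K :&: F| + 2 * f)%:R :> R by rewrite ler_nat.
    rewrite !natrD -mulr_natl; lra.
  rewrite (big_setID (A := K) F) /=.
  have h1 : 0 <= \sum_(j in K :\: F) sq (xs i - xs j) by apply: sumr_ge0 => j _; exact: sq_ge0.
  have h2 : #|K :&: F|%:R * (mu ^+ 2 * d2 i) <= \sum_(j in K :&: F) sq (xs i - xs j).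
    rewrite mulr_natl -sumr_const; apply: ler_sum => j; rewrite !inE => /andP[_ ->] //.
  have := ler_wpM2r (ltW (mulr_gt0 mu2 d2p)) cqR; lra.
have byz : \sum_(j in Bk) 2 * ip ei (v j) - \sum_(j in Dn) d2 j <= 3 * #|Bk|%:R * d2 i.
  have [Bk0|[j jB]] := set_0Vmem Bk.
    rewrite Bk0 big_set0 cards0; have : 0 <= \sum_(j in Dn) d2 j by apply: sumr_ge0.
    lra.
  have [j1 j1D] : exists j1, j1 \in Dn.
    by apply/card_gt0P; apply: leq_trans (cBD); apply/card_gt0P; exists j.
  have [j0 j0D hmin] := exists_min d2 j1D.
  have hb : \sum_(l in Bk) 2 * ip ei (v l) <= #|Bk|%:R * (3 * d2 i + d2 j0).
    rewrite mulr_natl -sumr_const; apply: ler_sum => l; rewrite inE => /andP[_ lM].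
    apply: le_trans (ip_amgm _ _) _.
    have := Dn_ord _ _ lM j0D.
    have -> : xs i - xs j0 = ei - (xs j0 - xstar) by rewrite /ei opprB addrA subrK.
    move=> h; have := sq_sub_le ei (xs j0 - xstar); rewrite -/(d2 j0) => h'.
    rewrite /d2 -/ei in h' *; lra.
  have hd : #|Dn|%:R * d2 j0 <= \sum_(l in Dn) d2 l.
    by rewrite mulr_natl -sumr_const; apply: ler_sum => l lD; apply: hmin.
  have hBD : #|Bk|%:R <= #|Dn|%:R :> R by rewrite ler_nat.
  have := ler_wpM2r (d20 j0) hBD; lra.
have hA : 2 * ip ei u <= V - (n%:R - f%:R - 4 * #|~: H|%:R + mu ^+ 2 * (k%:R + 1 - 2 * f%:R)) * d2 i.
  rewrite e1 nK sK.
  have KRe : #|K|%:R = n%:R - f%:R - 1 - #|Bk|%:R :> R by lra.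
  rewrite KRe.
  have BB : 0 <= #|~: H|%:R - #|Bk|%:R :> R by rewrite subr_ge0.
  have := mulr_ge0 BB (d20 i).
  lra.
have -> : xs i + alpha *: u - xstar = ei + alpha *: u by rewrite /ei addrAC.
rewrite sqD ipZr sqZ.
have := ler_wpM2l al0 hA; have := ler_wpM2l (sqr_ge0 alpha) hB2.
rewrite -/(d2 i) /d2 -/ei; lra.
Qed.

Unset Implicit Arguments.
Set Strict Implicit.

Theorem theorem2 (R : realType) (m n f k : nat)
    (H : {set 'I_n}) (X : 'I_n -> set 'rV[R]_m) (xstar : 'rV[R]_m)
    (mu alpha : R)
    (x : nat -> 'I_n -> 'rV[R]_m) (msg : nat -> 'I_n -> 'I_n -> 'rV[R]_m)
    (M : nat -> 'I_n -> {set 'I_n}) :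
  (#|~: H| <= f)%N ->
  (forall i, i \in H -> [/\ X i !=set0, eclosed (X i) & convex_set (X i)]) ->
  capX X H = [set xstar] ->
  k_redundant X H k ->
  0 < mu ->
  (forall (y : 'rV[R]_m) (S : {set 'I_n}), S \subset H -> (n - k <= #|S|)%N ->
     \big[Num.max/0]_(i in S) dist y (X i) >= mu * dist y (capX X S)) ->
  k%:R > 4 * f%:R / mu ^+ 2 + 2 * f%:R - 1 ->
  0 < alpha ->
  alpha < (mu ^+ 2 * k%:R - 2 * f%:R * mu ^+ 2 - 4 * f%:R + mu ^+ 2) / (4 * #|H|%:R ^+ 3) ->
  algorithm_run f X H alpha x msg M ->
  exists rho : R, 0 < rho < 1 /\
    forall t : nat,
      \sum_(i in H) enorm (x t i - xstar) ^+ 2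
        <= rho ^+ t * \sum_(i in H) enorm (x 0%N i - xstar) ^+ 2.
Proof.
move=> hB hX hcap hred mu0 hmu hk al0 al1 [h0 [hmsg hstep]].
have [nk|kn] := leqP n k.
  have allx : forall v : 'rV[R]_m, v = xstar.
    move=> v.
    have e : capX X finset.set0 = capX X H.
      apply: hred; first exact: finset.sub0set.
      by rewrite cards0; lia.
    have : capX X finset.set0 v by move=> i; rewrite finset.in_set0.
    by rewrite e hcap.
  exists (1/2); split; first by apply/andP; split; lra.
  move=> t.
  by rewrite !big1 ?mulr0 // => i _; rewrite (allx (x _ i)) subrr enorm_sq sq0.
have hxs : forall i, i \in H -> X i xstar.
  move=> i iH; have : capX X H xstar by rewrite hcap.
  by apply.
have hS : forall S : {set 'I_n}, S \subset H -> (n - k <= #|S|)%N -> capX X S = [set xstar].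
  by move=> S SH hc; rewrite hred.
have k2f : (2 * f <= k)%N.
  have hf0 : (0:R) <= f%:R by rewrite ler0n.
  have h4 : 0 <= 4 * f%:R / mu ^+ 2 :> R by apply: divr_ge0; [lra | exact: sqr_ge0].
  have : (2 * f)%:R < (k + 1)%:R :> R by rewrite natrD natrM; lra.
  rewrite ltr_nat; lia.
have hfn : (f.+1 <= n)%N by lia.
have inv : forall t i, i \in H -> X i (x t i).
  elim=> [|t IH] i iH; first exact: h0.
  have [_ _ _ ->] := hstep t i iH.
  have [ne cl cv] := hX i iH.
  by have [] := proj_spec (x t i + alpha *: \sum_(j in M t i) (msg t j i - x t i)) ne cl cv.
pose V t := \sum_(i in H) sq (x t i - xstar).
have V0 : forall t, 0 <= V t by move=> t; apply: sumr_ge0 => i _; exact: sq_ge0.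
pose c := mu ^+ 2 * k%:R - 2 * f%:R * mu ^+ 2 - 4 * f%:R + mu ^+ 2.
set N := #|H| in al1 *.
have NR : N%:R + #|~: H|%:R = n%:R :> R by rewrite -natrD cardsC card_ord.
have BR : #|~: H|%:R <= f%:R :> R by rewrite ler_nat.
have N0 : 0 < N%:R :> R.
  rewrite ltr0n lt0n; apply/negP => /eqP N0.
  by move: al1; rewrite N0 expr0n /= mulr0 invr0 mulr0; lra.
have N30 : 0 < 4 * N%:R ^+ 3 :> R by rewrite mulr_gt0 // exprn_gt0.
have hac : alpha * (4 * N%:R ^+ 3) < c by rewrite -ltr_pdivlMr.
pose rho0 := 1 - alpha * c + 2 * alpha ^+ 2 * N%:R ^+ 3.
have step : forall t, V t.+1 <= rho0 * V t.
  move=> t.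
  set A := alpha * V t + alpha ^+ 2 * (2 * N%:R ^+ 2 * V t).
  set coef := n%:R - f%:R - 4 * #|~: H|%:R + mu ^+ 2 * (k%:R + 1 - 2 * f%:R).
  have hi : forall i, i \in H -> sq (x t.+1 i - xstar) <= A + (1 - alpha * coef) * sq (x t i - xstar).
    move=> i iH.
    have [hMi hM hord ->] := hstep t i iH.
    have [ne cl cv] := hX i iH.
    set z := x t i + _.
    apply: le_trans (proj_obtuse cv (proj_spec z ne cl cv) (hxs i iH)) _.
    apply: le_trans (agent_step (k := k) (mu := mu) iH hB hfn _ hMi hM hord _ kn mu0 (ltW al0)) _.
    - by move=> j jH ji; apply: hmsg.
    - by apply: (far_card (X := X)) => //; exact: inv.
    - rewrite /A /coef -/(V t); lra.
  apply: le_trans (_ : V t.+1 <= \sum_(i in H) (A + (1 - alpha * coef) * sq (x t i - xstar))) _; first exact: ler_sum.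
  rewrite big_split /= sumr_const -mulr_sumr -/(V t) -mulr_natl.
  have hcoef : N%:R - coef <= - c by rewrite /coef /c; lra.
  have := ler_wpM2l (mulr_ge0 (ltW al0) (V0 t)) hcoef.
  rewrite /A /rho0; nra.
have r0 : 0 < alpha * c - 2 * alpha ^+ 2 * N%:R ^+ 3.
  have h2 : alpha * (alpha * (4 * N%:R ^+ 3)) < alpha * c by rewrite ltr_pM2l.
  have h3 : 0 < alpha ^+ 2 * N%:R ^+ 3 by rewrite mulr_gt0 // exprn_gt0.
  rewrite expr2 in h3 *; lra.
exists (Num.max rho0 (1/2)); split.
  apply/andP; split; first by rewrite lt_max; apply/orP; right; lra.
  by rewrite gt_max; apply/andP; split; rewrite /rho0; lra.
have rr : forall t, V t <= (Num.max rho0 (1/2)) ^+ t * V 0%N.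
  elim=> [|t IH]; first by rewrite expr0 mul1r.
  apply: le_trans (step t) _.
  apply: le_trans (_ : Num.max rho0 (1/2) * V t <= _).
    by apply: ler_wpM2r => //; rewrite le_max lexx.
  rewrite exprS -mulrA; apply: ler_wpM2l => //.
  by rewrite le_max; apply/orP; right; lra.
move=> t; have := rr t.
by rewrite /V (eq_bigr _ (fun i _ => enorm_sq _)) (eq_bigr (fun i => sq (x 0%N i - xstar)) (fun i _ => enorm_sq _)).
Qed.
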